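(* For every integer $n \geq 1$, the number of edges of the finite linear Jaco graph $J_n(x)$ is $$\varepsilon(J_n(x)) \;=\; \sum_{i=1}^{n} \left\lfloor \frac{2(i+1)}{3+\sqrt{5}} \right\rfloor .$$ (Equivalently, the sequence $(\varepsilon(J_n(x)))_{n\ge 1}$ is OEIS sequence A183137 with its $n=0$ term omitted.)
   Context: The finite linear Jaco graph $J_n(x)$ is the simple undirected graph on the vertex set $\{v_1,\dots,v_n\}$ defined as follows. $J_1(x)$ is the single vertex $v_1$. $J_2(x)$ is the single edge $v_1v_2$. For $n \geq 3$, start from the graph on $\{v_1,\dots,v_n\}$ with exactly the two edges $v_1v_2$ and $v_2v_3$. Then, for $i = 3,4,\dots,n-1$ in increasing order, let $d_i$ be the current degree of $v_i$ and add the edges $v_iv_{i+1}, v_iv_{i+2},\dots,v_iv_{i+t}$, where $t$ is the largest integer with $i+t \le n$ such that after adding these edges the degree of $v_i$ is at most $i$ (that is, $t=\max(0,\min(i-d_i,\,n-i))$). The graph obtained after step $i=n-1$ is $J_n(x)$. $\varepsilon(G)$ denotes the number of edges of a graph $G$. *)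

(* Defs.v *)
From mathcomp Require Import all_boot all_order all_algebra.
From mathcomp Require Export reals.
Set Implicit Arguments. Unset Strict Implicit. Unset Printing Implicit Defensive.

(* Graphs on vertices v_1..v_n are encoded by edge lists of pairs (a, b)
   with a < b, standing for the edge v_a v_b. *)

Definition jaco_deg (E : seq (nat * nat)) (i : nat) : nat :=
  count (fun e => (e.1 == i) || (e.2 == i)) E.

(* step i: add v_i v_{i+1}, ..., v_i v_{i+t}, t = max(0, min(i - d_i, n - i))
   (truncated subtraction on nat realises the max(0, _)). *)
Definition jaco_step (n : nat) (E : seq (nat * nat)) (i : nat) : seq (nat * nat) :=
  E ++ [seq (i, i + k) | k <- iota 1 (minn (i - jaco_deg E i) (n - i))].

Definition jaco_edges (n : nat) : seq (nat * nat) :=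
  if n <= 1 then [::]
  else if n == 2 then [:: (1, 2)]
  else foldl (jaco_step n) [:: (1, 2); (2, 3)] (iota 3 (n - 3)).

Definition jaco_num_edges (n : nat) : nat := size (undup (jaco_edges n)).

(* Main.v *)
Require Import Defs.
From mathcomp Require Import all_boot all_order all_algebra.
From mathcomp Require Import reals.
Import Order.TTheory GRing.Theory Num.Theory.
From mathcomp Require Import zify ring lra.

Definition Lj (g : nat -> nat) n j : seq (nat * nat) :=
  [seq (j, j + k) | k <- iota 1 (minn (g j) (n - j))].

Fixpoint Fm g n m : seq (nat * nat) :=
  if m is m'.+1 then Fm g n m' ++ Lj g n m else [::].

Definition Cc (g : nat -> nat) i := \sum_(1 <= j < i) (i <= j + g j : nat).

Lemma Cc_val g (H1 : forall j i, 1 <= j -> 1 <= i -> (j + g j < i) = (j.+1 <= g i))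
  (H2 : forall i, 1 <= i -> 1 <= g i <= i) i : 1 <= i -> Cc g i = i - g i.
Proof.
move=> i1; rewrite /Cc.
have /andP[g1 gi] := H2 i i1.
rewrite (big_cat_nat (n := g i)) //=.
rewrite big1_seq ?add0n; last first.
  move=> j /andP[_]; rewrite mem_index_iota => /andP[j1 jg].
  by rewrite leqNgt H1 // jg.
rewrite (eq_big_seq (fun _ => 1)); last first.
  move=> j; rewrite mem_index_iota => /andP[jg ji].
  rewrite leqNgt H1 ?ltnNge ?jg //; lia.
by rewrite sum_nat_const_nat; lia.
Qed.

Lemma deg_Lj g n j i : j < i <= n ->
  count (fun e : nat * nat => (e.1 == i) || (e.2 == i)) (Lj g n j) = (i <= j + g j).
Proof.
move=> /andP[ji i_n]; rewrite /Lj count_map.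
rewrite (@eq_in_count _ _ (pred1 (i - j))); last first.
  move=> k _ /=; apply/idP/idP; [case/orP; move/eqP; lia| move/eqP => ->; apply/orP; right; apply/eqP; lia].
rewrite count_uniq_mem ?iota_uniq // mem_iota.
congr (nat_of_bool _); apply/idP/idP; lia.
Qed.

Lemma deg_Fm g n m i : m < i <= n ->
  jaco_deg (Fm g n m) i = \sum_(1 <= j < m.+1) (i <= j + g j).
Proof.
elim: m => [|m IH] H; first by rewrite big_geq.
rewrite /= /jaco_deg count_cat -/(jaco_deg _ _) IH; last (move: H; clear; lia).
rewrite deg_Lj; last (move: H; clear; lia).
by rewrite [in RHS]big_nat_recr.
Qed.

Lemma step_Fm g n m (H1 : forall j i, 1 <= j -> 1 <= i -> (j + g j < i) = (j.+1 <= g i))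
  (H2 : forall i, 1 <= i -> 1 <= g i <= i) : m.+1 <= n ->
  jaco_step n (Fm g n m) m.+1 = Fm g n m.+1.
Proof.
move=> mn; rewrite /jaco_step deg_Fm ?leqnn ?mn //.
have := Cc_val g H1 H2 m.+1 (ltn0Sn m); rewrite /Cc => ->.
have /andP[_ gm] := H2 m.+1 (ltn0Sn m).
by rewrite subKn.
Qed.

Lemma fold_Fm g n (H1 : forall j i, 1 <= j -> 1 <= i -> (j + g j < i) = (j.+1 <= g i))
  (H2 : forall i, 1 <= i -> 1 <= g i <= i) m : forall a, a + m <= n ->
  foldl (jaco_step n) (Fm g n a) (iota a.+1 m) = Fm g n (a + m).
Proof.
elim: m => [|m IH] a H; first by rewrite addn0.
rewrite /= step_Fm //; last lia.
by rewrite IH ?addSnnS //; lia.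
Qed.

Lemma edges_Fm g n (H1 : forall j i, 1 <= j -> 1 <= i -> (j + g j < i) = (j.+1 <= g i))
  (H2 : forall i, 1 <= i -> 1 <= g i <= i) : 2 <= n ->
  jaco_edges n = Fm g n n.-1.
Proof.
move=> n2.
have g1 : g 1 = 1 by have := H2 1 (leqnn 1); lia.
have g2 : g 2 = 1.
  have := H1 1 2 (leqnn 1) isT; rewrite g1 /= => /esym.
  have := H2 2 isT; lia.
rewrite /jaco_edges; case: ifP => [|_]; first lia.
case: ifP => [/eqP n2e|/negbT n2e]; first by subst n; rewrite /= /Lj g1.
have -> : [:: (1, 2); (2, 3)] = Fm g n 2.
  rewrite /= /Lj g1 g2.
  have -> : minn 1 (n - 1) = 1 by lia.
  by have -> : minn 1 (n - 2) = 1 by lia.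
rewrite fold_Fm //; last lia.
congr Fm; lia.
Qed.

Lemma Fm_fst g n m e : e \in Fm g n m -> e.1 <= m.
Proof.
elim: m => [|m IH] //=; rewrite mem_cat => /orP[/IH|]; first exact: leqW.
by rewrite /Lj => /mapP[k _ ->].
Qed.

Lemma Fm_uniq g n m : uniq (Fm g n m).
Proof.
elim: m => [|m IH] //=; rewrite cat_uniq IH /=; apply/andP; split.
  apply/hasPn => x; rewrite /Lj => /mapP[k _ ->]; apply/negP => /Fm_fst /=; lia.
by rewrite map_inj_uniq ?iota_uniq // => k1 k2 [] /addnI.
Qed.

Lemma Fm_size g n m : size (Fm g n m) = \sum_(1 <= i < m.+1) minn (g i) (n - i).
Proof.
elim: m => [|m IH]; first by rewrite big_geq.
by rewrite /= size_cat IH size_map size_iota [in RHS]big_nat_recr.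
Qed.

Lemma sum_id g (H1 : forall j i, 1 <= j -> 1 <= i -> (j + g j < i) = (j.+1 <= g i))
  (H2 : forall i, 1 <= i -> 1 <= g i <= i) n : 1 <= n ->
  \sum_(1 <= i < n) minn (g i) (n - i) = \sum_(1 <= i < n.+1) (i - g i).
Proof.
elim: n => [//|n IH] _.
case: (posnP n) => [->|n0].
  rewrite big_geq // big_nat1; have := H2 1 isT; lia.
rewrite big_nat_recr //= [in RHS]big_nat_recr //= -IH //.
have -> : \sum_(1 <= i < n) minn (g i) (n.+1 - i) =
   \sum_(1 <= i < n) (minn (g i) (n - i) + (n.+1 <= i + g i)).
  apply: eq_big_nat => i /andP[i1 iN].
  case: leqP => H; lia.
rewrite big_split /= -addnA; congr (_ + _).
have := Cc_val g H1 H2 n.+1 isT; rewrite /Cc big_nat_recr //= => E.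
have := H2 n n0; have := H2 n.+1 isT; lia.
Qed.

Lemma num_edges g (H1 : forall j i, 1 <= j -> 1 <= i -> (j + g j < i) = (j.+1 <= g i))
  (H2 : forall i, 1 <= i -> 1 <= g i <= i) n : 1 <= n ->
  jaco_num_edges n = \sum_(1 <= i < n.+1) (i - g i).
Proof.
move=> n1; rewrite -sum_id //.
case: (ltnP 1 n) => n2.
  rewrite /jaco_num_edges (edges_Fm g n H1 H2 n2) undup_id ?Fm_uniq // Fm_size.
  by rewrite prednK //; lia.
have -> : n = 1 by lia.
by rewrite big_geq.
Qed.

Local Open Scope ring_scope.
Lemma sqrt5_irr_nat (p q : nat) : (0 < q)%N -> (p ^ 2 != 5 * q ^ 2)%N.
Proof.
move=> q0; apply/eqP => E.
case: (posnP p) => [p0|p0].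
  by move: E; rewrite p0; lia.
have := congr1 (logn 5) E.
rewrite lognM ?expn_gt0 ?q0 // !lognX (@logn_prime 5 5) //=.
lia.
Qed.


Definition xx (R : realType) : R := (Num.sqrt 5 - 1) / 2.

Lemma s5 (R : realType) : Num.sqrt (5 : R) ^+ 2 = 5.
Proof. by rewrite sqr_sqrtr. Qed.

Lemma s5b (R : realType) : 2 < Num.sqrt (5 : R) < 3.
Proof.
have h := s5 R; have h0 := sqrtr_ge0 (5 : R).
apply/andP; split; nra.
Qed.

Lemma irr (R : realType) (b : nat) (z : int) : (0 < b)%N -> b%:R * xx R != z%:~R.
Proof.
move=> b0; apply/eqP => Hz.
have h := s5 R.
have E : ((2 * z + b%:Z) ^+ 2)%:~R = ((5 * b%:Z ^+ 2)%:~R : R).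
  rewrite rmorphXn /= intrD intrM intrM rmorphXn /=.
  rewrite -[2%:~R]/(2:R) -[5%:~R]/(5:R) -[b%:~R]/(b%:R : R) -Hz /xx; set s := Num.sqrt (5:R) in h *; by rewrite -h; field.
move/intr_inj: E => /(congr1 absz).
rewrite abszX abszM abszX /= => E.
by have := sqrt5_irr_nat `|2 * z + b%:Z| b b0; rewrite E => /eqP; apply.
Qed.

Definition gz (R : realType) (i : nat) : int := Num.floor ((i.+1)%:R * xx R).
Definition gR (R : realType) (i : nat) : nat := `|gz R i|%N.

Lemma xx_pos (R : realType) : 1/2 < xx R < 1.
Proof. have := s5b R; rewrite /xx => /andP[h1 h2]; apply/andP; split; lra. Qed.

Lemma xx_key (R : realType) : xx R * (1 + xx R) = 1.
Proof. have h := s5 R; rewrite /xx; set s := Num.sqrt (5:R) in h *.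
rewrite -[RHS](_ : (s^+2 - 1) / 4 = 1); last by rewrite h; field.
by field.
Qed.

Lemma gz_bounds (R : realType) i : (1 <= i)%N -> (1 <= gz R i) && (gz R i <= i%:Z).
Proof.
move=> i1; have /andP[x1 x2] := xx_pos R.
have ib : (2 : R) <= (i.+1)%:R by rewrite (ler_nat R 2); lia.
rewrite /gz floor_ge_int -ltzD1 floor_lt_int intrD /=.
apply/andP; split.
  have -> : ((1:int)%:~R : R) = 1 by [].
  nra.
have -> : ((1:int)%:~R : R) = 1 by [].
rewrite -[(i%:Z)%:~R]/(i%:R : R) -natr1.
nra.
Qed.

Lemma gR_val (R : realType) i : (1 <= i)%N -> (gR R i)%:Z = gz R i.
Proof.
move=> i1; have /andP[h _] := gz_bounds R i i1.
by rewrite /gR gez0_abs //; apply: le_trans h.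
Qed.

Lemma gR_H2 (R : realType) i : (1 <= i)%N -> (1 <= gR R i <= i)%N.
Proof.
move=> i1; have := gz_bounds R i i1; rewrite -(gR_val R i i1).
by rewrite !lez_nat.
Qed.

Lemma keyR (R : realType) (x A B : R) : 0 < A -> 0 < x -> x * (1 + x) = 1 ->
  (A * x < B - A) = (A < B * x).
Proof.
move=> A0 x0 hx; apply/idP/idP => H.
  have : A * (1 + x) * x < B * x by rewrite ltr_pM2r //; lra.
  by rewrite -mulrA [(1 + x) * x]mulrC hx mulr1.
have : A * (1 + x) < B * x * (1 + x) by rewrite ltr_pM2r //; lra.
rewrite -mulrA hx mulr1; lra.
Qed.

Lemma floor_facts (R : realType) i : (1 <= i)%N ->
  ((gz R i)%:~R < (i.+1)%:R * xx R) && ((i.+1)%:R * xx R < (gz R i)%:~R + 1).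
Proof.
move=> i1; have := floor_itv ((i.+1)%:R * xx R); rewrite -/(gz R i) intrD.
have := irr R i.+1 (gz R i) (ltn0Sn i).
move=> hn /andP[h1 h2]; rewrite lt_neqAle eq_sym hn h1 /=.
by rewrite -[1%:~R]/(1:R) in h2.
Qed.

Lemma gR_H1 (R : realType) j i : (1 <= j)%N -> (1 <= i)%N ->
  (j + gR R j < i)%N = (j.+1 <= gR R i)%N.
Proof.
move=> j1 i1.
rewrite -ltz_nat -lez_nat PoszD (gR_val R j j1) (gR_val R i i1).
have /andP[a1 a2] := floor_facts R j j1.
have /andP[b1 b2] := floor_facts R i i1.
have /andP[x1 x2] := xx_pos R.
have hk := xx_key R.
have eA : (j.+1)%:R = j%:R + 1 :> R by rewrite -natr1.
have eB : (i.+1)%:R = i%:R + 1 :> R by rewrite -natr1.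
have A0 : (0 : R) < (j.+1)%:R by rewrite ltr0n.
have x0 : 0 < xx R by lra.
have K := @keyR R (xx R) _ (i.+1)%:R A0 x0 hk.
rewrite eA eB in a1 a2 b1 b2 K A0.
move: (gz R j) (gz R i) a1 a2 b1 b2 => k1 k2 a1 a2 b1 b2.
apply/idP/idP => H.
  have H' : (j%:Z + k1 + 1 <= i%:Z) by lia.
  have : (j%:Z + k1 + 1)%:~R <= (i%:Z)%:~R :> R by rewrite ler_int.
  rewrite !intrD => {}H'.
  have HR : (j%:R + 1) * xx R < i%:R + 1 - (j%:R + 1).
    rewrite -[(j%:Z)%:~R]/(j%:R : R) -[(i%:Z)%:~R]/(i%:R : R) -[1%:~R]/(1 : R) in H'.
    lra.
  rewrite K ?divr_gt0 // in HR.
  have : ((j.+1)%:Z)%:~R < (k2 + 1)%:~R :> R.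
    rewrite intrD -[((j.+1)%:Z)%:~R]/((j.+1)%:R : R) eA -[1%:~R]/(1 : R); lra.
  rewrite ltr_int; lia.
have : ((j.+1)%:Z)%:~R <= k2%:~R :> R by rewrite ler_int.
rewrite -[((j.+1)%:Z)%:~R]/((j.+1)%:R : R) eA => H'.
have HR : (j%:R + 1) * xx R < i%:R + 1 - (j%:R + 1).
  rewrite K ?divr_gt0 //; lra.
have : k1%:~R < ((i%:Z - j%:Z)%:~R : R).
  rewrite intrD intrN -[(j%:Z)%:~R]/(j%:R : R) -[(i%:Z)%:~R]/(i%:R : R); lra.
rewrite ltr_int; lia.
Qed.

Lemma gR_H3 (R : realType) i : (1 <= i)%N ->
  Num.floor ((2 * (i.+1)%:R) / (3 + Num.sqrt 5) : R) = (i - gR R i)%:Z.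
Proof.
move=> i1.
have /andP[_ gi] := gR_H2 R i i1.
rewrite -subzn // (gR_val R i i1).
have /andP[b1 b2] := floor_facts R i i1.
have -> : (2 * (i.+1)%:R) / (3 + Num.sqrt 5) = (i.+1)%:R - (i.+1)%:R * xx R :> R.
  have h := s5 R; have /andP[s1 s2] := s5b R.
  rewrite /xx; set s := Num.sqrt (5:R) in h s1 s2 *.
  have s0 : 3 + s != 0 by apply/eqP; lra.
  apply: (mulIf s0); rewrite divfK //.
  have -> : ((i.+1)%:R - (i.+1)%:R * ((s - 1) / 2)) * (3 + s) = (i.+1)%:R * (9 - s^+2) / 2 :> R by field.
  by rewrite h; field.
apply: floor_def.
rewrite !intrD intrN -[(i%:Z)%:~R]/(i%:R : R) -natr1 -[1%:~R]/(1 : R).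
rewrite -natr1 in b1 b2.
move: (gz R i) b1 b2 => k b1 b2.
apply/andP; split; lra.
Qed.

Theorem proposition1 (R : realType) (n : nat) : (1 <= n)%N ->
  (jaco_num_edges n)%:Z =
  \sum_(1 <= i < n.+1)
     Num.floor ((2 * (i.+1)%:R) / (3 + Num.sqrt 5) : R).
Proof.
move=> n1.
rewrite (num_edges (gR R) (gR_H1 R) (gR_H2 R) n n1) -natz natr_sum.
apply: eq_big_nat => i /andP[i1 _].
by rewrite gR_H3 // natz.
Qed.
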